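(* For every ground state $s\in\mathcal{S}$ and every level $\mathfrak{h}\ge1$ of the hierarchy (i.e. every $\mathfrak{h}\in[1,\mathfrak{m}]$), there exists $\mathcal{P}\in\mathscr{P}^{\star,\mathfrak{h}}_{\rm rec}$ with $s\in\mathcal{P}$. In other words, the unique element of $\mathscr{P}^{\star,\mathfrak{h}}$ containing $s$ belongs to one of the closed communicating classes of $\mathfrak{X}^{\star,\mathfrak{h}}$, not to the transient set.
   Context: Setting. Let $\Omega$ be a finite set with a connected undirected graph structure; write $\eta\sim\xi$ if $\{\eta,\xi\}$ is an edge. Let $\mathbb{H}:\Omega\to\mathbb{R}$. Paths and heights. A path $\omega:\eta\to\xi$ is a sequence $(\omega_n)_{n=0}^N$ with $\omega_0=\eta$, $\omega_N=\xi$ and $\omega_n\sim\omega_{n+1}$ ($N=0$ allowed). Its height is $\Phi_\omega:=\max_n\mathbb{H}(\omega_n)$. Set $\Phi(\eta,\xi):=\min_{\omega:\eta\to\xi}\Phi_\omega$. For nonempty sets, $\Phi(\mathcal{A},\mathcal{B}):=\min_{\eta\in\mathcal{A},\xi\in\mathcal{B}}\Phi(\eta,\xi)$, and $\Phi(\mathcal{A},\eta):=\Phi(\mathcal{A},\{\eta\})$. Ground states. $\mathcal{S}:=\operatorname{argmin}_\Omega\mathbb{H}$, $\overline{\Phi}:=\max_{s,s'\in\mathcal{S}}\Phi(s,s')$, and $\overline{\Omega}:=\{\eta:\Phi(\mathcal{S},\eta)\le\overline{\Phi}\}$. Sets. For $\mathcal{A}\subseteq\Omega$: $\mathcal{F}(\mathcal{A}):=\operatorname{argmin}_{\mathcal{A}}\mathbb{H}$;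 $\partial\mathcal{A}:=\{\eta\notin\mathcal{A}:\eta\sim\xi\text{ for some }\xi\in\mathcal{A}\}$; $\partial^\star\mathcal{A}:=\mathcal{F}(\partial\mathcal{A})$. A set is connected if any two of its points are joined by a path inside it. Stable plateaux and cycles. A stable plateau is a nonempty connected set $\mathcal{P}$ with constant energy $\mathbb{H}(\mathcal{P})$ such that $\mathbb{H}>\mathbb{H}(\mathcal{P})$ on $\partial\mathcal{P}$. A cycle is a nonempty connected $\mathcal{C}$ with $\max_{\mathcal{C}}\mathbb{H}<\min_{\partial\mathcal{C}}\mathbb{H}$. Its depth is $\Gamma^{\mathcal{C}}:=\min_{\partial\mathcal{C}}\mathbb{H}-\min_{\mathcal{C}}\mathbb{H}$. General construction (C). Let $\mathscr{C}$ be a collection of pairwise disjoint cycles contained in $\overline{\Omega}$ with $|\mathscr{C}|\ge2$, and let $\Gamma^\star>0$. Put - $\mathscr{C}^\star:=\{\mathcal{C}\in\mathscr{C}:\Gamma^{\mathcal{C}}\ge\Gamma^\star\}$ and $\mathscr{C}^\sharp:=\{\mathcal{C}\in\mathscr{C}:\Gamma^{\mathcal{C}}<\Gamma^\star\}$; - $\mathscr{P}^{\mathscr{C}}:=\{\mathcal{F}(\mathcal{C}):\mathcal{C}\in\mathscr{C}\}$ and $\mathscr{P}^{\mathscr{C}^\star}:=\{\mathcal{F}(\mathcal{C}):\mathcal{C}\in\mathscr{C}^\star\}$; - $\Delta^{\mathscr{C}}:=\overline{\Omega}\setminus\bigcup_{\mathcal{C}\in\mathscr{C}}\mathcal{C}$.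 Let $\mathfrak{X}^{\mathscr{C}}$ be the continuous-time Markov chain on $\Omega^{\mathscr{C}}:=\Delta^{\mathscr{C}}\cup\mathscr{P}^{\mathscr{C}}$, in which each $\mathcal{F}(\mathcal{C})$ is treated as a single point. Its rates are: - $\mathfrak{R}^{\mathscr{C}}(\eta,\xi)=1$ for $\eta,\xi\in\Delta^{\mathscr{C}}$ with $\eta\sim\xi$ and $\mathbb{H}(\xi)\le\mathbb{H}(\eta)$; - $\mathfrak{R}^{\mathscr{C}}(\eta,\mathcal{F}(\mathcal{C}))=|\{\zeta\in\mathcal{C}:\eta\sim\zeta\}|$ for $\eta\in\Delta^{\mathscr{C}}\cap\partial\mathcal{C}$; - $\mathfrak{R}^{\mathscr{C}}(\mathcal{F}(\mathcal{C}),\eta)=|\mathcal{F}(\mathcal{C})|^{-1}|\{\zeta\in\mathcal{C}:\eta\sim\zeta\}|$ if $\Gamma^{\mathcal{C}}\le\Gamma^\star$ and $\eta\in\partial^\star\mathcal{C}$; - all other rates are $0$. The trace chain $\mathfrak{X}^{\mathscr{C}^\star}$ on $\mathscr{P}^{\mathscr{C}^\star}$ has rates, for distinct $\mathcal{C},\mathcal{C}'\in\mathscr{C}^\star$, $$\mathfrak{R}^{\mathscr{C}^\star}(\mathcal{F}(\mathcal{C}),\mathcal{F}(\mathcal{C}')):=\sum_{\eta\in\Delta^{\mathscr{C}}}\mathfrak{R}^{\mathscr{C}}(\mathcal{F}(\mathcal{C}),\eta)\,\mathbf{P}^{\mathscr{C}}_\eta[\mathcal{T}_{\mathcal{F}(\mathcal{C}')}=\mathcal{T}_{\mathscr{P}^{\mathscr{C}^\star}}].$$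 Here $\mathbf{P}^{\mathscr{C}}_\eta$ is the law of $\mathfrak{X}^{\mathscr{C}}$ started at $\eta$, and $\mathcal{T}_{\mathcal{A}}$ is the hitting time of $\mathcal{A}$. Hierarchy. Let $\mathscr{P}^1=\{\mathcal{P}_1^1,\dots,\mathcal{P}^1_{\nu_0}\}$ be the collection of all stable plateaux contained in $\overline{\Omega}$, and assume $\nu_0\ge2$. Suppose that at some level $\mathfrak{h}\ge1$ the sets $\mathcal{P}^{\mathfrak{h}}_1,\dots,\mathcal{P}^{\mathfrak{h}}_{\nu_{\mathfrak{h}-1}}$ are defined, with $\nu_{\mathfrak{h}-1}\ge2$. Then define: - $\mathbb{H}(\mathcal{P}^{\mathfrak{h}}_i):=\min_{\mathcal{P}^{\mathfrak{h}}_i}\mathbb{H}$; - $\mathscr{P}^{\star,\mathfrak{h}}:=\{\mathcal{P}^{\mathfrak{h}}_i:i\in[1,\nu_{\mathfrak{h}-1}]\}$; - $\breve{\mathcal{P}}^{\mathfrak{h}}_i:=\bigcup_{j\ne i}\mathcal{P}^{\mathfrak{h}}_j$; - $\Gamma^{\mathfrak{h}}_i:=\Phi(\mathcal{P}^{\mathfrak{h}}_i,\breve{\mathcal{P}}^{\mathfrak{h}}_i)-\mathbb{H}(\mathcal{P}^{\mathfrak{h}}_i)$ and $\Gamma^{\star,\mathfrak{h}}:=\min_i\Gamma_i^{\mathfrak{h}}$; - $\mathcal{V}^{\mathfrak{h}}_i:=\{\eta\in\Omega:\Phi(\mathcal{P}^{\mathfrak{h}}_i,\eta)-\mathbb{H}(\mathcal{P}^{\mathfrak{h}}_i)<\Gamma^{\mathfrak{h}}_i\}$.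 Set $\mathscr{C}^1:=\{\mathcal{V}^1_i:i\in[1,\nu_0]\}$. For $\mathfrak{h}\ge2$, set $$\mathscr{C}^{\mathfrak{h}}:=\{\mathcal{V}^{\mathfrak{h}}_i:i\in[1,\nu_{\mathfrak{h}-1}]\}\cup\{\mathcal{C}\in\mathscr{C}^{\star,\mathfrak{h}-1}_{\rm tr}\cup\mathscr{C}^{\sharp,\mathfrak{h}-1}:\mathcal{C}\cap\mathcal{V}^{\mathfrak{h}}_i=\emptyset\ \forall i\}.$$ Apply (C) to $(\mathscr{C}^{\mathfrak{h}},\Gamma^{\star,\mathfrak{h}})$. Write $\mathscr{C}^{\star,\mathfrak{h}}:=(\mathscr{C}^{\mathfrak{h}})^\star$ and $\mathscr{C}^{\sharp,\mathfrak{h}}:=(\mathscr{C}^{\mathfrak{h}})^\sharp$. Let $\mathfrak{X}^{\star,\mathfrak{h}}$ be the trace chain of (C) on $\mathscr{P}^{(\mathscr{C}^{\mathfrak{h}})^\star}$. Decompose $\mathscr{P}^{(\mathscr{C}^{\mathfrak{h}})^\star}$ into the closed communicating classes $\mathscr{P}^{\star,\mathfrak{h}}_1,\dots,\mathscr{P}^{\star,\mathfrak{h}}_{\nu_{\mathfrak{h}}}$ of $\mathfrak{X}^{\star,\mathfrak{h}}$ and the set $\mathscr{P}^{\star,\mathfrak{h}}_{\rm tr}$ of transient elements. Let $\mathscr{C}^{\star,\mathfrak{h}}_m:=\{\mathcal{C}\in\mathscr{C}^{\star,\mathfrak{h}}:\mathcal{F}(\mathcal{C})\in\mathscr{P}^{\star,\mathfrak{h}}_m\}$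 for $m\in\{1,\dots,\nu_{\mathfrak{h}},{\rm tr}\}$. If $\nu_{\mathfrak{h}}\ge2$, define $\mathcal{P}^{\mathfrak{h}+1}_i:=\bigcup_{\mathcal{P}\in\mathscr{P}^{\star,\mathfrak{h}}_i}\mathcal{P}$ for $i\in[1,\nu_{\mathfrak{h}}]$ and continue to level $\mathfrak{h}+1$. The terminal level $\mathfrak{m}$ is the first $\mathfrak{h}$ with $\nu_{\mathfrak{h}}=1$. Finally, $\mathscr{P}^{\star,\mathfrak{h}}_{\rm rec}:=\mathscr{P}^{\star,\mathfrak{h}}_1\cup\dots\cup\mathscr{P}^{\star,\mathfrak{h}}_{\nu_{\mathfrak{h}}}$. Here $[a,b]$ denotes the set of integers from $a$ to $b$. *)

(* Defs.v *)
From HB Require Import structures.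
From mathcomp Require Import all_boot all_order all_algebra.
From mathcomp Require boolp classical_sets.
From mathcomp Require Import reals constructive_ereal.
Set Implicit Arguments. Unset Strict Implicit. Unset Printing Implicit Defensive.
Import Order.TTheory GRing.Theory Num.Theory.
Local Open Scope ring_scope.

Section Hierarchy.
Variables (R : realType) (T : finType) (e : rel T) (H : T -> R).

Definition height (x : T) (p : seq T) : R := \big[Num.max/H x]_(y <- p) H y.

(* Phi(x,y) = min over paths x -> y of their heights (inf = min: finitely many values) *)
Definition Phi (x y : T) : R :=
  inf (fun r => exists p : seq T, [/\ path e x p, last x p = y & r = height x p]).

Definition PhiS (A B : {set T}) : R :=
  inf (fun r => exists x y, [/\ x \in A, y \in B & r = Phi x y]).

Definition ground : {set T} := [set x | [forall y, H x <= H y]].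

Definition Phibar : R :=
  sup (fun r => exists s s', [/\ s \in ground, s' \in ground & r = Phi s s']).

Definition Omegabar : {set T} := [set x | PhiS ground [set x] <= Phibar].

Definition Fmin (A : {set T}) : {set T} := [set x in A | [forall y in A, H x <= H y]].

Definition bd (A : {set T}) : {set T} := [set x | (x \notin A) && [exists y in A, e x y]].

Definition bdstar (A : {set T}) : {set T} := Fmin (bd A).

Definition connectedb (A : {set T}) : bool :=
  [forall x in A, forall y in A,
     connect [rel u v | [&& e u v, u \in A & v \in A]] x y].

Definition stable_plateau (P : {set T}) : bool :=
  [&& P != set0, connectedb P,
      [forall x in P, forall y in P, H x == H y] &
      [forall x in P, forall y in bd P, H x < H y]].

Definition minH (A : {set T}) : R := inf (fun r => exists2 x, x \in A & r = H x).

(* depth of a cycle, with min over an empty boundary = +oo *)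
Definition depth (C : {set T}) : \bar R :=
  ((\big[Order.min/+oo%E]_(x in bd C) (H x)%:E) - (minH C)%:E)%E.

Section Construction.
Variables (Cs : {set {set T}}) (Gs : R).

Definition Cstar : {set {set T}} := [set C in Cs | (Gs%:E <= depth C)%E].
Definition Csharp : {set {set T}} := [set C in Cs | (depth C < Gs%:E)%E].
Definition Delta : {set T} := Omegabar :\: \bigcup_(C in Cs) C.

(* States of X^C: inl eta for eta in Delta, inr (F C) for C in Cs. *)
Definition rateC (x y : T + {set T}) : R :=
  match x, y with
  | inl a, inl b => if [&& a \in Delta, b \in Delta, e a b & H b <= H a] then 1 else 0
  | inl a, inr P =>
      if a \in Delta then
        \sum_(C in Cs | Fmin C == P)
           (if a \in bd C then #|[set z in C | e a z]|%:R else 0)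
      else 0
  | inr P, inl a =>
      if a \in Delta then
        \sum_(C in Cs | Fmin C == P)
           (if (depth C <= Gs%:E)%E && (a \in bdstar C)
            then #|[set z in C | e a z]|%:R / #|P|%:R else 0)
      else 0
  | inr _, inr _ => 0
  end.

Definition jumpP (x y : T + {set T}) : R := rateC x y / (\sum_z rateC x z).

Fixpoint hitn (a : T + {set T}) (A : {set (T + {set T})}) (n : nat) (x : T + {set T}) : R :=
  if x \in A then (x == a)%:R else
  match n with
  | 0 => 0
  | n'.+1 => \sum_y jumpP x y * hitn a A n' y
  end.

(* P_x [ T_a = T_A ]  (first entrance into A happens at a) *)
Definition hitprob (a : T + {set T}) (A : {set (T + {set T})}) (x : T + {set T}) : R :=
  sup (fun r => exists n, r = hitn a A n x).

Definition Pstar : {set {set T}} := [set Fmin C | C in Cstar].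
Definition Astar : {set (T + {set T})} := [set (inr P : T + {set T}) | P in Pstar].

(* rates of the trace chain on P^{C*} *)
Definition trate (P Q : {set T}) : R :=
  if P == Q then 0 else
  \sum_(a in Delta) rateC (inr P) (inl a) * hitprob (inr Q) Astar (inl a).

Definition trel : rel {set T} := [rel P Q | [&& P \in Pstar, Q \in Pstar & 0 < trate P Q]].
Definition reach (P Q : {set T}) : bool := connect trel P Q.

Definition commclass (K : {set {set T}}) : bool :=
  [exists P in Pstar, K == [set Q in Pstar | reach P Q && reach Q P]].
Definition closedclass (K : {set {set T}}) : bool :=
  [forall P in K, forall Q in Pstar, (0 < trate P Q) ==> (Q \in K)].

Definition classes : {set {set {set T}}} := [set K | commclass K && closedclass K].
Definition recP : {set {set T}} := \bigcup_(K in classes) K.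
End Construction.

Section Level.
Variable (Ps : {set {set T}}).
Definition breve (P : {set T}) : {set T} := \bigcup_(Q in Ps | Q != P) Q.
Definition Gam (P : {set T}) : R := PhiS P (breve P) - minH P.
Definition Gstar : R := inf (fun r => exists2 P, P \in Ps & r = Gam P).
Definition Vset (P : {set T}) : {set T} := [set x | PhiS P [set x] - minH P < Gam P].
(* C^h from the current plateaux Ps and the leftover cycles L of the previous level *)
Definition Cs_of (L : {set {set T}}) : {set {set T}} :=
  [set Vset P | P in Ps] :|: [set C in L | [forall P in Ps, [disjoint C & Vset P]]].
End Level.

Definition Plateaux1 : {set {set T}} := [set P | stable_plateau P && (P \subset Omegabar)].

(* one step: (plateaux of level h, leftover cycles C^{*,h-1}_tr u C^{#,h-1})
   |-> the same data at level h+1 *)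
Definition step (d : {set {set T}} * {set {set T}}) : {set {set T}} * {set {set T}} :=
  let Cs := Cs_of d.1 d.2 in
  let G := Gstar d.1 in
  ([set \bigcup_(Q in K) Q | K : {set {set T}} in classes Cs G],
   [set C in Cstar Cs G | Fmin C \notin recP Cs G] :|: Csharp Cs G).

(* data at level h (h >= 1) *)
Definition level (h : nat) := iter h.-1 step (Plateaux1, set0).
Definition CsL (h : nat) := Cs_of (level h).1 (level h).2.
Definition GsL (h : nat) := Gstar (level h).1.
Definition nu (h : nat) : nat := #|classes (CsL h) (GsL h)|.
Definition recL (h : nat) : {set {set T}} := recP (CsL h) (GsL h).

End Hierarchy.

(* Main.v *)
Require Import Defs.
From HB Require Import structures.
From mathcomp Require Import all_boot all_order all_algebra.
From mathcomp Require boolp classical_sets.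
From mathcomp Require Import reals constructive_ereal lra.
Import Order.TTheory GRing.Theory Num.Theory.
Local Open Scope ring_scope.

Set Implicit Arguments. Unset Strict Implicit. Unset Printing Implicit Defensive.


Section Gen.
Variable R : realType.

Lemma fin_bound (I : finType) (f : I -> R) (E : classical_sets.set R) :
  (forall r, E r -> exists i, r = f i) ->
  forall r, E r -> `|r| <= \sum_i `|f i|.
Proof.
move=> Ef r /Ef [i ->].
rewrite (bigD1 i) //= lerDl sumr_ge0 // => j _; exact: normr_ge0.
Qed.

Lemma fin_min (I : finType) (f : I -> R) (E : classical_sets.set R) :
  (forall r, E r -> exists i, r = f i) -> (exists r, E r) ->
  exists r, [/\ E r, inf E = r & forall r', E r' -> r <= r'].
Proof.
move=> Ef [r0 Er0].
have [i0 Hi0] := Ef _ Er0.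
pose S := [set i | boolp.asbool (E (f i))].
have i0S : i0 \in S by rewrite inE; apply/boolp.asboolP; rewrite -Hi0.
case: (arg_minP f i0S) => i iS imin.
have Ei : E (f i) by have iS' : i \in S := iS; move: iS'; rewrite inE => /boolp.asboolP.
have lb : forall r', E r' -> f i <= r'.
  move=> r' Er'; have [j Hj] := Ef _ Er'; subst r'; apply: imin.
  by change (j \in S); rewrite inE; apply/boolp.asboolP.
exists (f i); split => //.
apply/eqP; rewrite eq_le; apply/andP; split.
- have := @ge_inf R E; apply.
  + exists (- \sum_j `|f j|) => x Ex; rewrite lerNl.
    apply: le_trans (fin_bound Ef Ex); rewrite -normrN; exact: ler_norm.
  + exact: Ei.
- apply: lb_le_inf; first by exists (f i).
  by move=> x Ex; apply: lb.
Qed.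

Lemma fin_sup (I : finType) (f : I -> R) (E : classical_sets.set R) :
  (forall r, E r -> exists i, r = f i) ->
  forall r, E r -> r <= sup E.
Proof.
move=> Ef r Er; apply: (@sup_upper_bound R E) => //; split; first by exists r.
exists (\sum_j `|f j|) => x Ex; apply: le_trans (fin_bound Ef Ex); exact: ler_norm.
Qed.

End Gen.


Section PhiL.
Variables (R : realType) (T : finType) (e : rel T) (H : T -> R).
Hypothesis esym : symmetric e.
Hypothesis econn : forall x y, connect e x y.

Lemma ht_le x p r : (height H x p <= r) = (H x <= r) && all (fun y => H y <= r) p.
Proof.
elim: p => [|y p IH]; rewrite /height ?big_nil ?big_cons /= ?andbT //.
rewrite /height in IH; rewrite ge_max IH.
by case: (H y <= r); case: (H x <= r).
Qed.

Lemma ht_in x p : exists2 t, t \in x :: p & height H x p = H t.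
Proof.
elim: p => [|y p [t tin IH]]; first by exists x; rewrite ?inE ?eqxx // /height big_nil.
rewrite /height big_cons -/(height H x p) IH.
have [h|h] := leP (H y) (H t).
- exists t => //.
  by move: tin; rewrite !inE => /orP[->|->]; rewrite ?orbT.
- by exists y; rewrite // !inE eqxx orbT.
Qed.

Lemma ht_ge x p t : t \in x :: p -> H t <= height H x p.
Proof.
move=> tin; have := lexx (height H x p); rewrite {1}ht_le => /andP[hx /allP ha].
by move: tin; rewrite inE => /orP[/eqP->|/ha].
Qed.

Definition PE x y := fun r => exists p, [/\ path e x p, last x p = y & r = height H x p].

Lemma Phi_spec x y : exists p, [/\ path e x p, last x p = y, Phi e H x y = height H x p &
  forall q, path e x q -> last x q = y -> height H x p <= height H x q].
Proof.
have h1 : forall r, PE x y r -> exists t, r = H t.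
  by move=> r [p [_ _ ->]]; have [t _ ->] := ht_in x p; exists t.
have h2 : exists r, PE x y r.
  by have /connectP [p pp pl] := econn x y; exists (height H x p); exists p; split.
have [r [[p [pp pl ->]] eq lb]] := @fin_min R T H (PE x y) h1 h2.
exists p; split => // q qp ql; apply: lb; by exists q.
Qed.

Lemma Phi_le x y q : path e x q -> last x q = y -> Phi e H x y <= height H x q.
Proof. by have [p [pp pl -> lb]] := Phi_spec x y; apply: lb. Qed.

Lemma Phi_low x y r : Phi e H x y <= r ->
  exists p, [/\ path e x p, last x p = y & all (fun t => H t <= r) (x :: p)].
Proof.
have [p [pp pl -> _]] := Phi_spec x y; rewrite ht_le => /andP[h1 h2].
by exists p; split => //=; rewrite h1.
Qed.

Lemma Phi_geL x y : H x <= Phi e H x y.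
Proof. have [p [pp pl -> _]] := Phi_spec x y; apply: ht_ge; exact: mem_head. Qed.

Lemma Phi_geR x y : H y <= Phi e H x y.
Proof. have [p [pp pl -> _]] := Phi_spec x y; apply: ht_ge; rewrite -pl; exact: mem_last. Qed.

Lemma Phi_refl x : Phi e H x x <= H x.
Proof. by have := @Phi_le x x [::] erefl erefl; rewrite /height big_nil. Qed.

Lemma Phi_trans x y z : Phi e H x z <= Num.max (Phi e H x y) (Phi e H y z).
Proof.
have [p [pp pl -> _]] := Phi_spec x y; have [q [qp ql -> _]] := Phi_spec y z.
apply: le_trans (@Phi_le x z (p ++ q) _ _) _; first by rewrite cat_path pp pl.
  by rewrite last_cat pl.
rewrite ht_le all_cat le_max ht_ge ?mem_head //=.
apply/andP; split; apply/allP => t tin; rewrite le_max; apply/orP.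
  by left; apply: ht_ge; rewrite inE tin orbT.
by right; apply: ht_ge; rewrite inE tin orbT.
Qed.

Lemma Phi_symle x y : Phi e H y x <= Phi e H x y.
Proof.
have [p [pp pl -> _]] := Phi_spec x y.
have rp : path e (last x p) (rev (belast x p)).
  by rewrite rev_path; apply: sub_path pp => a b; rewrite esym.
have lr : last (last x p) (rev (belast x p)) = x.
  by case: p {pp pl rp} => //= z p; rewrite rev_cons last_rcons.
rewrite -pl; apply: le_trans (Phi_le rp lr) _.
rewrite ht_le; apply/andP; split; first by apply: ht_ge; exact: mem_last.
rewrite all_rev; apply/allP => t tin; apply: ht_ge.
by rewrite lastI mem_rcons inE tin orbT.
Qed.

Lemma Phi_sym x y : Phi e H x y = Phi e H y x.
Proof. by apply/eqP; rewrite eq_le !Phi_symle. Qed.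

Lemma Phi_ext x y z : e y z -> Phi e H x z <= Num.max (Phi e H x y) (H z).
Proof.
move=> eyz; apply: le_trans (Phi_trans x y z) _.
rewrite ge_max le_max lexx /=.
have := @Phi_le y z [:: z]; rewrite /= eyz => /(_ erefl erefl).
rewrite /height big_cons big_nil => h; apply: le_trans h _.
rewrite ge_max le_max lexx orbT /= le_max (Phi_geR x y) //.
Qed.

Lemma PhiS_spec (A B : {set T}) : A != set0 -> B != set0 ->
  exists x y, [/\ x \in A, y \in B, PhiS e H A B = Phi e H x y &
     forall x' y', x' \in A -> y' \in B -> Phi e H x y <= Phi e H x' y'].
Proof.
case/set0Pn => a aA; case/set0Pn => b bB.
have [r [[x [y [xA yB ->]]] eq lb]] := @fin_min R (prod T T)
   (fun xy => Phi e H xy.1 xy.2)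
   (fun r => exists x y, [/\ x \in A, y \in B & r = Phi e H x y])
   ltac:(by move=> r [x [y [_ _ ->]]]; exists (x, y))
   ltac:(by exists (Phi e H a b), a, b).
exists x, y; split => // x' y' x'A y'B; apply: lb; by exists x', y'.
Qed.

Lemma PhiS_le (A B : {set T}) x y : x \in A -> y \in B -> PhiS e H A B <= Phi e H x y.
Proof.
move=> xA yB; have [x0 [y0 [_ _ -> lb]]] := @PhiS_spec A B
  ltac:(by apply/set0Pn; exists x) ltac:(by apply/set0Pn; exists y).
exact: lb.
Qed.

Lemma minH_spec (A : {set T}) : A != set0 ->
  exists2 x, x \in A & minH H A = H x /\ forall y, y \in A -> H x <= H y.
Proof.
case/set0Pn => a aA.
have [r [[x xA ->] eq lb]] := @fin_min R T H (fun r => exists2 x, x \in A & r = H x)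
  ltac:(by move=> r [x _ ->]; exists x) ltac:(by exists (H a), a).
exists x => //; split => // y yA; apply: lb; by exists y.
Qed.

Lemma minH_le (A : {set T}) y : y \in A -> minH H A <= H y.
Proof.
move=> yA; have [x _ [-> lb]] := @minH_spec A ltac:(by apply/set0Pn; exists y).
exact: lb.
Qed.

End PhiL.


Section Sums.
Variable R : realType.
Lemma psum_gt0 (I : finType) (P : pred I) (F : I -> R) :
  (forall i, P i -> 0 <= F i) ->
  (0 < \sum_(i | P i) F i) <-> exists i, P i /\ 0 < F i.
Proof.
move=> F0; split.
- move=> h; apply: boolp.contrapT => hn; move: h; apply/negP; rewrite -leNgt.
  apply: sumr_le0 => i Pi; rewrite leNgt; apply/negP => fi.
  by apply: hn; exists i; split.
- case=> i [Pi Fi]; rewrite (bigD1 i) //=; apply: lt_le_trans Fi _.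
  by rewrite lerDl sumr_ge0 // => j /andP[Pj _]; apply: F0.
Qed.
End Sums.

Section Chain.
Variables (R : realType) (T : finType) (e : rel T) (H : T -> R).
Variables (Cs : {set {set T}}) (Gs : R).
Hypothesis Cne : forall C, C \in Cs -> C != set0.

Notation rate := (rateC e H Cs Gs).
Notation jump := (jumpP e H Cs Gs).
Notation Dl := (Delta e H Cs).

Lemma Fmin_sub C : Fmin H C \subset C.
Proof. by apply/subsetP => x; rewrite inE => /andP[]. Qed.

Lemma Fmin_ne C : C != set0 -> Fmin H C != set0.
Proof.
move=> /(minH_spec H) [x xC [_ lb]]; apply/set0Pn; exists x.
by rewrite inE xC; apply/forall_inP.
Qed.

Lemma cnt_gt0 C a : a \in bd e C -> 0 < #|[set z in C | e a z]|%:R :> R.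
Proof.
rewrite inE => /andP[_ /exists_inP [z zC ez]]; rewrite ltr0n card_gt0.
by apply/set0Pn; exists z; rewrite inE zC.
Qed.

Lemma rate_ge0 x y : 0 <= rate x y.
Proof.
case: x => [a|P]; case: y => [b|Q] //=.
- by case: ifP.
- case: ifP => // _; apply: sumr_ge0 => C _; case: ifP => // _; exact: ler0n.
- case: ifP => // _; apply: sumr_ge0 => C _; case: ifP => // _.
  by apply: divr_ge0; exact: ler0n.
Qed.

Lemma rate_ll a b : 0 < rate (inl a) (inl b) -> [&& a \in Dl, b \in Dl, e a b & H b <= H a].
Proof. by rewrite /=; case: ifP => //; rewrite ltxx. Qed.

Lemma rate_ll' a b : [&& a \in Dl, b \in Dl, e a b & H b <= H a] -> 0 < rate (inl a) (inl b).
Proof. by rewrite /= => ->; exact: ltr01. Qed.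

Lemma rate_lr a P : 0 < rate (inl a) (inr P) <->
   a \in Dl /\ exists C, [/\ C \in Cs, Fmin H C = P & a \in bd e C].
Proof.
rewrite /=; case: ifP => aD; last by split => [|[]]; rewrite ?ltxx.
rewrite psum_gt0; last by move=> C _; case: ifP => // _; exact: ler0n.
split.
- case=> C [/andP[CC /eqP FC]]; case: ifP => [aC _|]; last by rewrite ltxx.
  by split => //; exists C.
- case=> _ [C [CC FC aC]]; exists C; rewrite CC FC eqxx aC; split => //.
  exact: cnt_gt0.
Qed.

Lemma rate_rl P a : 0 < rate (inr P) (inl a) <->
   a \in Dl /\ exists C, [/\ C \in Cs, Fmin H C = P, (depth e H C <= Gs%:E)%E & a \in bdstar e H C].
Proof.
rewrite /=; case: ifP => aD; last by split => [|[]]; rewrite ?ltxx.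
rewrite psum_gt0; last by move=> C _; case: ifP => // _; apply: divr_ge0; exact: ler0n.
split.
- case=> C [/andP[CC /eqP FC]]; case: ifP => [/andP[dC aC] _|]; last by rewrite ltxx.
  by split => //; exists C.
- case=> _ [C [CC FC dC aC]]; exists C; rewrite CC FC eqxx dC aC; split => //.
  apply: divr_gt0; first by apply: cnt_gt0; move: aC; rewrite inE => /andP[].
  rewrite ltr0n card_gt0 -FC; apply: Fmin_ne; exact: Cne.
Qed.

Lemma rate_rr P Q : rate (inr P) (inr Q) = 0.
Proof. by []. Qed.

Lemma jump_ge0 x y : 0 <= jump x y.
Proof. by apply: divr_ge0; [exact: rate_ge0 | apply: sumr_ge0 => z _; exact: rate_ge0]. Qed.

Lemma jump_gt0 x y : (0 < jump x y) = (0 < rate x y).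
Proof.
rewrite /jumpP; have S0 : rate x y <= \sum_z rate x z.
  by rewrite (bigD1 y) //= lerDl sumr_ge0 // => z _; exact: rate_ge0.
apply/idP/idP => h.
- move: h; apply: contraTT; rewrite -!leNgt => hr.
  have -> : rate x y = 0 by apply/eqP; rewrite eq_le hr rate_ge0.
  by rewrite mul0r.
- by apply: divr_gt0 => //; apply: lt_le_trans S0.
Qed.

Lemma jump_sum x : \sum_y jump x y <= 1.
Proof.
rewrite /jumpP -mulr_suml.
have [->|S0] := eqVneq (\sum_z rate x z) 0; first by rewrite invr0 mulr0 ler01.
by rewrite mulfV.
Qed.

Lemma hitn_in a (A : {set T + {set T}}) n x : x \in A -> hitn e H Cs Gs a A n x = (x == a)%:R.
Proof. by case: n => [|n] /= ->. Qed.

Lemma hitn_S a (A : {set T + {set T}}) n x : x \notin A ->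
  hitn e H Cs Gs a A n.+1 x = \sum_y jump x y * hitn e H Cs Gs a A n y.
Proof. by move=> /negbTE /= ->. Qed.

Lemma hitn_0 a (A : {set T + {set T}}) x : x \notin A -> hitn e H Cs Gs a A 0 x = 0.
Proof. by move=> /negbTE /= ->. Qed.

Lemma hitn_bnd a (A : {set T + {set T}}) n x : 0 <= hitn e H Cs Gs a A n x <= 1.
Proof.
elim: n x => [|n IH] x.
- by case: (boolP (x \in A)) => xA; [rewrite hitn_in // ler0n lern1 leq_b1 | rewrite hitn_0 // lexx ler01].
case: (boolP (x \in A)) => xA; first by rewrite hitn_in // ler0n lern1 leq_b1.
rewrite hitn_S //; apply/andP; split.
- by apply: sumr_ge0 => y _; apply: mulr_ge0; [exact: jump_ge0 | by case/andP: (IH y)].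
- apply: le_trans (jump_sum x); apply: ler_sum => y _.
  rewrite ler_piMr ?jump_ge0 //; by case/andP: (IH y).
Qed.

Lemma hitn_ge0 a (A : {set T + {set T}}) n x : 0 <= hitn e H Cs Gs a A n x.
Proof. by case/andP: (hitn_bnd a A n x). Qed.

Lemma hitn_step a (A : {set T + {set T}}) n x : x \notin A -> 0 < hitn e H Cs Gs a A n.+1 x <->
  exists y, 0 < rate x y /\ 0 < hitn e H Cs Gs a A n y.
Proof.
move=> xA; rewrite hitn_S // psum_gt0; last by move=> y _; apply: mulr_ge0; [exact: jump_ge0|exact: hitn_ge0].
split.
- case=> y [_ h]; exists y; rewrite -jump_gt0.
  have jp : 0 < jump x y.
    rewrite lt_def jump_ge0 andbT; apply/eqP => j0; move: h; by rewrite j0 mul0r ltxx.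
  by rewrite pmulr_rgt0 in h.
- case=> y [ry hy]; exists y; split => //; apply: mulr_gt0 => //; by rewrite jump_gt0.
Qed.

Lemma hitprob_pos a (A : {set T + {set T}}) x : 0 < hitprob e H Cs Gs a A x <-> exists n, 0 < hitn e H Cs Gs a A n x.
Proof.
rewrite /hitprob; split.
- move=> h; apply: boolp.contrapT => hn; move: h; apply/negP; rewrite -leNgt.
  apply: ge_sup; first by exists (hitn e H Cs Gs a A 0 x), 0%N.
  move=> r [n ->]; rewrite leNgt; apply/negP => h; apply: hn; by exists n.
- case=> n hn; apply: lt_le_trans hn _; apply: sup_upper_bound; last by exists n.
  split; first by exists (hitn e H Cs Gs a A 0 x), 0%N.
  by exists 1 => r [k ->]; case/andP: (hitn_bnd a A k x).
Qed.

End Chain.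


Section Rec.
Variables (R : realType) (T : finType) (e : rel T) (H : T -> R).
Hypothesis esym : symmetric e.
Variables (Cs : {set {set T}}) (Gs : R).
Hypothesis Cne : forall C, C \in Cs -> C != set0.
Hypothesis Cdisj : forall C1 C2, C1 \in Cs -> C2 \in Cs -> C1 != C2 -> [disjoint C1 & C2].
Variable m : R.
Hypothesis mlb : forall y, m <= H y.
Let L := m + Gs.

Notation rate := (rateC e H Cs Gs).
Notation Dl := (Delta e H Cs).
Notation As := (Astar e H Cs Gs).
Notation Ps := (Pstar e H Cs Gs).
Notation hit := (hitn e H Cs Gs).

Let rlr a P := rate_lr e H Cs Gs a P.
Let rrl P a := @rate_rl _ _ e H Cs Gs Cne P a.
Let hstep a A n x := @hitn_step _ _ e H Cs Gs a A n x.
Let hin a A n x := @hitn_in _ _ e H Cs Gs a A n x.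
Let hzz a A x := @hitn_0 _ _ e H Cs Gs a A x.

Lemma Finj C1 C2 : C1 \in Cs -> C2 \in Cs -> Fmin H C1 = Fmin H C2 -> C1 = C2.
Proof.
move=> C1s C2s FE; case: (eqVneq C1 C2) => // ne.
have /set0Pn [z zF] := Fmin_ne H (Cne C1s).
have zC1 := subsetP (Fmin_sub H C1) z zF.
have zC2 : z \in C2 by rewrite FE in zF; exact: subsetP (Fmin_sub H C2) z zF.
have := Cdisj C1s C2s ne; rewrite -setI_eq0 => /eqP/setP/(_ z).
by rewrite !inE zC1 zC2.
Qed.

Lemma minH_ge C : C \in Cs -> m <= minH H C.
Proof. by move=> /Cne /(minH_spec H) [x _ [-> _]]. Qed.

Lemma bdstar_bd C x : x \in bdstar e H C -> x \in bd e C /\ forall y, y \in bd e C -> H x <= H y.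
Proof. by rewrite inE => /andP[xb /forall_inP h]. Qed.

Lemma depth_star C x : x \in bdstar e H C -> depth e H C = (H x - minH H C)%:E.
Proof.
move=> /bdstar_bd [xb lb]; rewrite /depth EFinB; congr (_ - _)%E.
apply/eqP; rewrite eq_le; apply/andP; split.
- exact: (bigmin_le_cond _ _ xb).
- apply: le_bigmin => [|y yb]; first exact: leey.
  by rewrite lee_fin lb.
Qed.

Lemma depth_ge C : (Gs%:E <= depth e H C)%E -> forall z, z \in bd e C -> minH H C + Gs <= H z.
Proof.
move=> dC z zb.
have /set0Pn [x xs] : bdstar e H C != set0 by rewrite /bdstar; apply: (Fmin_ne H); apply/set0Pn; exists z.
move: dC; rewrite (depth_star xs) lee_fin => h.
have [_ lb] := bdstar_bd xs; apply: le_trans (lb _ zb).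
by rewrite addrC -lerBrDr.
Qed.

Definition ok (x : T + {set T}) : Prop :=
  match x with
  | inl u => H u <= L
  | inr P => forall C, C \in Cs -> Fmin H C = P -> exists2 z, z \in bd e C & H z <= L
  end.
Definition okge (x : T + {set T}) : Prop :=
  match x with
  | inl u => L <= H u
  | inr P => forall C, C \in Cs -> Fmin H C = P -> forall z, z \in bd e C -> L <= H z
  end.

Lemma ok_step x y : 0 < rate x y -> ok x -> ok y.
Proof.
case: x => [u|P]; case: y => [v|Q].
- by move=> /rate_ll /and4P [_ _ _ h] hu; apply: le_trans hu.
- move=> /rlr [_ [C0 [C0s FC0 ub]]] hu C Cs' FC.
  have <- : C0 = C by apply: Finj => //; rewrite FC0 FC.
  by exists u.
- move=> /rrl [_ [C2 [C2s FC2 _ vs]]] hP.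
  have [z zb hz] := hP C2 C2s FC2; have [_ lb] := bdstar_bd vs.
  exact: le_trans (lb _ zb) hz.
- by rewrite ltxx.
Qed.

Lemma okge_back x y : 0 < rate x y -> okge y -> okge x.
Proof.
case: x => [u|P]; case: y => [v|Q].
- by move=> /rate_ll /and4P [_ _ _ h] hv; apply: le_trans h.
- by move=> /rlr [_ [C0 [C0s FC0 ub]]] hQ; apply: hQ C0 C0s FC0 u ub.
- move=> /rrl [_ [C2 [C2s FC2 _ vs]]] hv C Cs' FC.
  have <- : C2 = C by apply: Finj => //; rewrite FC2 FC.
  have [_ lb] := bdstar_bd vs; move=> z zb; exact: le_trans hv (lb _ zb).
- by rewrite ltxx.
Qed.

Lemma rev_step x y : 0 < rate x y -> ok x -> okge y -> 0 < rate y x.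
Proof.
case: x => [u|P]; case: y => [v|Q].
- move=> /rate_ll /and4P [uD vD euv _] hu hv; apply: rate_ll'.
  by rewrite vD uD esym euv (le_trans hu hv).
- move=> /rlr [uD [C0 [C0s FC0 ub]]] hu hQ; apply/rrl; split => //.
  have us : u \in bdstar e H C0.
    rewrite inE ub; apply/forall_inP => y yb; exact: le_trans hu (hQ C0 C0s FC0 y yb).
  exists C0; split => //; rewrite (depth_star us) lee_fin lerBlDl.
  apply: le_trans hu _; rewrite /L lerD2r; exact: minH_ge.
- move=> /rrl [vD [C2 [C2s FC2 _ vs]]] _ _; apply/rlr; split => //.
  by exists C2; split => //; case: (bdstar_bd vs).
- by rewrite ltxx.
Qed.

Lemma inl_notA u : inl u \notin As.
Proof. by apply/imsetP => [[P _]]. Qed.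

Lemma inr_A P : (inr P \in As) = (P \in Ps).
Proof.
apply/imsetP/idP => [[P' P's [->]] //|Ps']; by exists P.
Qed.

Lemma Pstar_P P : P \in Ps -> exists C, [/\ C \in Cs, (Gs%:E <= depth e H C)%E & Fmin H C = P].
Proof. by case/imsetP => C; rewrite inE => /andP[Cs' dC] ->; exists C. Qed.

Lemma okge_Q Q : Q \in Ps -> okge (inr Q).
Proof.
move=> /Pstar_P [C' [C's dC' FC']] C Cs' FC z zb.
have eC : C' = C by apply: Finj => //; rewrite FC FC'.
subst C'; apply: le_trans (depth_ge dC' zb); rewrite /L lerD2r; exact: minH_ge.
Qed.

Lemma GE Q n x : Q \in Ps -> 0 < hit (inr Q) As n x -> okge x.
Proof.
move=> Qs; elim: n x => [|n IH] x.
- case: (boolP (x \in As)) => xA; last by rewrite hzz // ltxx.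
  by rewrite hin //; case: eqP => [->|]; [move=> _; exact: okge_Q | rewrite ltxx].
- case: (boolP (x \in As)) => xA.
    by rewrite hin //; case: eqP => [->|]; [move=> _; exact: okge_Q | rewrite ltxx].
  move/(@hstep _ _ _ _ xA) => [y [rxy hy]].
  exact: okge_back rxy (IH y hy).
Qed.

Lemma Main P Q n x : Q \in Ps -> x \notin As -> ok x -> 0 < hit (inr Q) As n x ->
  (exists k, 0 < hit (inr P) As k x) ->
  (exists a, [/\ a \in Dl, 0 < rate (inr Q) (inl a) & exists k, 0 < hit (inr P) As k (inl a)])
  /\ ok (inr Q).
Proof.
move=> Qs; elim: n x => [|n IH] x xA okx; first by rewrite hzz // ltxx.
move/(@hstep _ _ _ _ xA) => [y [rxy hy]] Bx.
have gy := GE Qs hy; have oky := ok_step rxy okx; have ryx := rev_step rxy okx gy.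
case: (boolP (y \in As)) => yA.
- move: hy; rewrite hin //; case: eqP => [ey _|]; last by rewrite ltxx.
  subst y; split => //; case: x xA okx rxy ryx Bx => [a|P'] xA okx rxy ryx Bx; last by move: rxy; rewrite ltxx.
  by exists a; split => //; case/rlr: rxy.
- apply: (IH y yA oky hy); case: Bx => k hk; exists k.+1.
  by apply/(@hstep _ _ _ _ yA); exists x.
Qed.

Lemma hitprob_ge0 a (A : {set T + {set T}}) x : 0 <= hitprob e H Cs Gs a A x.
Proof.
apply: le_trans (hitn_ge0 e H Cs Gs a A 0 x) _; apply: sup_upper_bound; last by exists 0%N.
split; first by exists (hit a A 0 x), 0%N.
by exists 1 => r [k ->]; case/andP: (hitn_bnd e H Cs Gs a A k x).
Qed.

Definition good (P : {set T}) := exists C, [/\ C \in Cs, (Gs%:E <= depth e H C)%E, Fmin H C = P & minH H C = m].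

Lemma good_P P : good P -> P \in Ps.
Proof. by case=> C [Cs' dC <- _]; apply/imsetP; exists C => //; rewrite inE Cs' dC. Qed.

Lemma trate_term P Q : 0 < trate e H Cs Gs P Q -> P != Q /\
  exists a, [/\ a \in Dl, 0 < rate (inr P) (inl a) & 0 < hitprob e H Cs Gs (inr Q) As (inl a)].
Proof.
rewrite /trate; case: eqP => [_|/eqP ne]; first by rewrite ltxx.
rewrite psum_gt0; last by move=> a _; apply: mulr_ge0; [exact: rate_ge0 | exact: hitprob_ge0].
case=> a [aD h]; split => //; exists a.
have rp : 0 < rate (inr P) (inl a).
  rewrite lt_def rate_ge0 andbT; apply/eqP => r0; move: h; by rewrite r0 mul0r ltxx.
by split => //; rewrite pmulr_rgt0 in h.
Qed.

Lemma sym_step P Q : good P -> Q \in Ps -> 0 < trate e H Cs Gs P Q ->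
  good Q /\ 0 < trate e H Cs Gs Q P.
Proof.
move=> gP Qs; have Pgs := good_P gP; move: gP => [CP [CPs dCP FCP mCP]].
move=> /trate_term [ne [a [aD ra hp]]].
have [_ [C' [C's FC' dC' as']]] := (rrl P a).1 ra.
have eC : C' = CP by apply: Finj => //; rewrite FC' FCP.
subst C'.
have Ha : H a = L.
  move: dC' dCP; rewrite (depth_star as') !lee_fin mCP /L => h1 h2; lra.
have oka : ok (inl a) by rewrite /ok Ha.
have Ba : exists k, 0 < hit (inr P) As k (inl a).
  exists 1%N; apply/(@hstep _ _ _ _ (inl_notA a)); exists (inr P); split.
  - apply/rlr; split => //; exists CP; split => //; by case: (bdstar_bd as').
  - by rewrite hin ?inr_A ?eqxx ?ltr01.
have [n hn] := (hitprob_pos e H Cs Gs _ _ _).1 hp.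
have [[a' [a'D ra' [k hk]]] okQ] := Main Qs (inl_notA a) oka hn Ba.
split.
- have [CQ [CQs dCQ FCQ]] := Pstar_P Qs; exists CQ; split => //.
  have [z zb hz] := okQ CQ CQs FCQ; have h1 := depth_ge dCQ zb; have h2 := minH_ge CQs.
  move: hz h1 h2; rewrite /L => hz h1 h2; lra.
- rewrite /trate; case: eqP => [eQP|_]; first by move: ne; rewrite eQP eqxx.
  apply/psum_gt0; first by move=> b _; apply: mulr_ge0; [exact: rate_ge0 | exact: hitprob_ge0].
  exists a'; split => //; apply: mulr_gt0 => //.
  by apply/(hitprob_pos e H Cs Gs _ _ _); exists k.
Qed.

Lemma reach_back P0 p X : good X -> connect (trel e H Cs Gs) X P0 ->
  path (trel e H Cs Gs) X p ->
  good (last X p) /\ connect (trel e H Cs Gs) (last X p) P0.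
Proof.
elim: p X => [|Y p IH] X gX cX //= /andP[tXY pY].
move: tXY => /and3P [Xs Ys tr].
have [gY tYX] := sym_step gX Ys tr.
apply: IH => //; apply: connect_trans cX; apply: connect1.
by rewrite /trel /= Ys Xs tYX.
Qed.

Lemma recurrent C0 : C0 \in Cs -> minH H C0 = m -> (Gs%:E <= depth e H C0)%E ->
  Fmin H C0 \in recP e H Cs Gs.
Proof.
move=> C0s mC0 dC0; set P0 := Fmin H C0.
have g0 : good P0 by exists C0.
have P0s := good_P g0.
pose K := [set Q in Ps | reach e H Cs Gs P0 Q && reach e H Cs Gs Q P0].
have P0K : P0 \in K by rewrite inE P0s /reach connect0.
apply/bigcupP; exists K => //; rewrite inE; apply/andP; split.
- by apply/exists_inP; exists P0.
- apply/forall_inP => P PK; apply/forall_inP => Q Qs; apply/implyP => tPQ.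
  move: PK; rewrite inE => /and3P [Ps' r0P rP0].
  have rQ : reach e H Cs Gs P0 Q.
    apply: connect_trans r0P _; apply: connect1; by rewrite /trel /= Ps' Qs tPQ.
  rewrite inE Qs rQ /=.
  have /connectP [p pp pl] := rQ.
  by have [_] := reach_back g0 (connect0 _ _) pp; rewrite -pl.
Qed.

End Rec.


Section Lev.
Variables (R : realType) (T : finType) (e : rel T) (H : T -> R).
Hypothesis esym : symmetric e.
Hypothesis econn : forall x y, connect e x y.

Definition PsOK (Ps : {set {set T}}) :=
  [/\ forall P, P \in Ps -> P != set0,
      forall P Q, P \in Ps -> Q \in Ps -> P != Q -> [disjoint P & Q] &
      forall P u v, P \in Ps -> u \in P -> e u v -> H v <= minH H P -> v \in P].

Definition CsOK (Cs : {set {set T}}) :=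
  [/\ forall C, C \in Cs -> C != set0,
      forall C1 C2, C1 \in Cs -> C2 \in Cs -> C1 != C2 -> [disjoint C1 & C2] &
      forall C x y, C \in Cs -> x \in C -> y \in bd e C -> H x < H y].

Lemma path_inv (S : {set T}) (Q : pred T) x p :
  (forall u v, u \in S -> e u v -> Q v -> v \in S) ->
  x \in S -> path e x p -> all Q p -> last x p \in S.
Proof.
move=> st; elim: p x => [|y p IH] x //= xS /andP[exy pp] /andP[Qy Qp].
exact: IH (st _ _ xS exy Qy) pp Qp.
Qed.

Lemma disjP (A B : {set T}) z : [disjoint A & B] -> z \in A -> z \in B -> False.
Proof.
rewrite -setI_eq0 => /eqP/setP/(_ z); rewrite !inE => h zA zB; by rewrite zA zB in h.
Qed.

Lemma disj_sym (A B : {set T}) : [disjoint A & B] -> [disjoint B & A].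
Proof. by rewrite -!setI_eq0 setIC. Qed.

Section Level.
Variable Ps : {set {set T}}.
Hypothesis POK : PsOK Ps.
Hypothesis Pcard : (1 < #|Ps|)%N.

Lemma other P : P \in Ps -> exists2 Q, Q \in Ps & Q != P.
Proof.
move=> PP; case: (boolP [exists Q in Ps, Q != P]) => [/exists_inP [Q ? ?]|]; first by exists Q.
rewrite negb_exists_in => /forall_inP hn.
have : Ps \subset [set P].
  by apply/subsetP => Q QP; rewrite inE; move: (hn Q QP); rewrite negbK.
by move/subset_leq_card; rewrite cards1 leqNgt Pcard.
Qed.

Lemma breve_ne P : P \in Ps -> breve Ps P != set0.
Proof.
move=> PP; have [Q QP ne] := other PP; case: POK => ne0 _ _.
have /set0Pn [z zQ] := ne0 Q QP; apply/set0Pn; exists z.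
by apply/bigcupP; exists Q => //; rewrite QP.
Qed.

Lemma breve_mem P y : y \in breve Ps P -> exists Q, [/\ Q \in Ps, Q != P & y \in Q].
Proof. by case/bigcupP => Q /andP[QP ne] yQ; exists Q. Qed.

Lemma P_ne P : P \in Ps -> P != set0.
Proof. by case: POK => h _ _; apply: h. Qed.

Lemma Gam_pos P : P \in Ps -> 0 < Gam e H Ps P.
Proof.
move=> PP; rewrite /Gam subr_gt0.
have [x [y [xP yb -> _]]] := PhiS_spec e H (P_ne PP) (breve_ne PP).
rewrite ltNge; apply/negP => /(Phi_low econn) [p [pp pl /andP[_ hp]]].
have yP : y \in P.
  rewrite -pl; apply: (path_inv _ xP pp hp) => u v uP euv hv.
  by case: POK => _ _ cl; apply: cl PP uP euv hv.
have [Q [QP ne yQ]] := breve_mem yb.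
case: POK => _ dj _; exact: disjP (dj _ _ QP PP ne) yQ yP.
Qed.

Lemma set1_ne (x : T) : [set x] != set0.
Proof. by apply/set0Pn; exists x; rewrite inE. Qed.

Definition fS (P : {set T}) x := PhiS e H P [set x].

Lemma fS_spec P x : P \in Ps -> exists2 p, p \in P & fS P x = Phi e H p x.
Proof.
move=> PP; rewrite /fS; have [p [y [pP yx -> _]]] := PhiS_spec e H (P_ne PP) (set1_ne x).
by exists p => //; move: yx; rewrite inE => /eqP->.
Qed.

Lemma fS_le (P : {set T}) p x : p \in P -> fS P x <= Phi e H p x.
Proof. by move=> pP; apply: PhiS_le => //; rewrite inE. Qed.

Lemma fS_ge P x : P \in Ps -> H x <= fS P x.
Proof. by move=> PP; have [p _ ->] := fS_spec x PP; exact: Phi_geR H econn p x. Qed.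

Lemma fS_ext P y x : P \in Ps -> e y x -> fS P x <= Num.max (fS P y) (H x).
Proof.
move=> PP eyx; have [p pP ->] := fS_spec y PP.
apply: le_trans (fS_le x pP) _; exact: Phi_ext H econn p y x eyx.
Qed.

Lemma memV P x : (x \in Vset e H Ps P) = (fS P x < PhiS e H P (breve Ps P)).
Proof. by rewrite inE /Gam ltrD2r. Qed.

Lemma V_bd P y : P \in Ps -> y \in bd e (Vset e H Ps P) -> PhiS e H P (breve Ps P) <= H y.
Proof.
move=> PP; rewrite inE => /andP[yV /exists_inP [z zV eyz]].
move: yV zV; rewrite !memV -leNgt => h1 h2.
have := fS_ext PP (eyz : e y z); rewrite esym in eyz.
have := fS_ext PP eyz => h3 _.
have := le_trans h1 h3; rewrite le_max => /orP[h|//].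
by move: (lt_le_trans h2 h); rewrite ltxx.
Qed.

Lemma V_cycle P x y : P \in Ps -> x \in Vset e H Ps P -> y \in bd e (Vset e H Ps P) -> H x < H y.
Proof.
move=> PP xV yb; rewrite memV in xV.
exact: le_lt_trans (fS_ge x PP) (lt_le_trans xV (V_bd PP yb)).
Qed.

Lemma V_ne P : P \in Ps -> Vset e H Ps P != set0.
Proof.
move=> PP; have [x xP [mx _]] := minH_spec H (P_ne PP).
apply/set0Pn; exists x; rewrite inE.
have := Gam_pos PP; have := fS_le x xP; have := Phi_refl H econn x.
rewrite /fS /Gam => h1 h2 h3; move: h1 h2 h3; rewrite mx => h1 h2 h3.
have h4 := le_trans h2 h1; lra.
Qed.

Lemma V_disj P Q : P \in Ps -> Q \in Ps -> P != Q -> [disjoint Vset e H Ps P & Vset e H Ps Q].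
Proof.
move=> PP QP ne; rewrite -setI_eq0; apply/eqP/setP => x; rewrite in_setI in_set0.
apply/negP => /andP[].
rewrite !memV.
have [p pP ->] := fS_spec x PP; have [q qP ->] := fS_spec x QP => hp hq.
have qb : q \in breve Ps P by apply/bigcupP; exists Q => //; rewrite QP eq_sym ne.
have pb : p \in breve Ps Q by apply/bigcupP; exists P => //; rewrite PP ne.
have c1 := PhiS_le e H pP qb; have c2 := PhiS_le e H qP pb.
have t := Phi_trans H econn p x q.
rewrite (Phi_sym H esym econn x q) (Phi_sym H esym econn q p) in t c2.
have : Num.max (Phi e H p x) (Phi e H q x) < Phi e H p q.
  rewrite gt_max; apply/andP; split; [exact: lt_le_trans hp c1 | exact: lt_le_trans hq c2].
by move=> h; move: (le_lt_trans t h); rewrite ltxx.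
Qed.

Lemma depth_lb C r : (forall y, y \in bd e C -> r + minH H C <= H y) -> (r%:E <= depth e H C)%E.
Proof.
move=> lb; rewrite /depth.
have : ((r + minH H C)%:E <= \big[Order.min/+oo%E]_(x in bd e C) (H x)%:E)%E.
  by apply: le_bigmin => [|y yb]; [exact: leey | rewrite lee_fin lb].
case: (\big[Order.min/+oo%E]_(x in bd e C) (H x)%:E) => [b| |] //=.
  by rewrite !lee_fin => h; lra.
by move=> _; rewrite addye ?leey.

Qed.

Lemma Gstar_le P : P \in Ps -> Gstar e H Ps <= Gam e H Ps P.
Proof.
move=> PP; rewrite /Gstar; have [r [_ -> lb]] := @fin_min R _ (Gam e H Ps) (fun r => exists2 P, P \in Ps & r = Gam e H Ps P)
  ltac:(by move=> r [Q _ ->]; exists Q) ltac:(by exists (Gam e H Ps P), P).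
by apply: lb; exists P.
Qed.

Variable s : T.
Hypothesis hs : forall y, H s <= H y.

Lemma V_s P : P \in Ps -> s \in P ->
  [/\ s \in Vset e H Ps P, minH H (Vset e H Ps P) = H s & ((Gstar e H Ps)%:E <= depth e H (Vset e H Ps P))%E].
Proof.
move=> PP sP.
have mP : minH H P = H s.
  apply/eqP; rewrite eq_le minH_le //=; have [x _ [-> _]] := minH_spec H (P_ne PP); exact: hs.
have sV : s \in Vset e H Ps P.
  rewrite inE mP; have := Gam_pos PP; have := fS_le s sP; have := Phi_refl H econn s.
  rewrite /fS => h1 h2 h3; have := le_trans h2 h1; lra.
have mV : minH H (Vset e H Ps P) = H s.
  apply/eqP; rewrite eq_le minH_le //=; have [x _ [-> _]] := minH_spec H (V_ne PP); exact: hs.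
split => //; apply: (@le_trans _ _ (Gam e H Ps P)%:E); first by rewrite lee_fin Gstar_le.
apply: depth_lb => y yb; rewrite mV; have := V_bd PP yb; rewrite /Gam mP; lra.
Qed.

Variable L : {set {set T}}.
Hypothesis LOK : CsOK L.

Lemma Cs_OK : CsOK (Cs_of e H Ps L).
Proof.
have memC C : C \in Cs_of e H Ps L ->
   (exists2 P, P \in Ps & C = Vset e H Ps P) \/
   (C \in L /\ forall P, P \in Ps -> [disjoint C & Vset e H Ps P]).
  rewrite inE => /orP[/imsetP [P PP ->]|]; first by left; exists P.
  by rewrite inE => /andP[CL /forall_inP h]; right; split.
case: LOK => Lne Ldj Lcy; split.
- move=> C /memC [[P PP ->]|[CL _]]; [exact: V_ne | exact: Lne].
- move=> C1 C2 /memC h1 /memC h2 ne.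
  move: h1 h2 ne => [[P1 P1s ->]|[C1L h1]] [[P2 P2s ->]|[C2L h2]] ne.
  + by apply: V_disj => //; apply: contraNneq ne => ->.
  + by apply: disj_sym; apply: h2.
  + by apply: h1.
  + exact: Ldj.
- move=> C x y /memC [[P PP ->]|[CL _]]; [exact: V_cycle | exact: Lcy].
Qed.

End Level.
End Lev.


Section Cls.
Variables (R : realType) (T : finType) (e : rel T) (H : T -> R).
Hypothesis esym : symmetric e.
Variables (Cs : {set {set T}}) (G : R).
Hypothesis COK : CsOK e H Cs.

Notation Ps := (Pstar e H Cs G).
Notation cls := (classes e H Cs G).

Lemma class_mem K : K \in cls -> exists2 P0, P0 \in Ps &
  K = [set Q in Ps | reach e H Cs G P0 Q && reach e H Cs G Q P0].
Proof. by rewrite inE => /andP[/exists_inP [P0 P0s /eqP ->] _]; exists P0. Qed.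

Lemma class_sub K Q : K \in cls -> Q \in K -> Q \in Ps.
Proof. by move=> /class_mem [P0 _ ->]; rewrite inE => /andP[]. Qed.

Lemma class_eq K1 K2 Z : K1 \in cls -> K2 \in cls -> Z \in K1 -> Z \in K2 -> K1 = K2.
Proof.
move=> /class_mem [P1 P1s ->] /class_mem [P2 P2s ->].
rewrite !inE => /and3P[_ a1 b1] /and3P[_ a2 b2].
have r12 := connect_trans a1 b2; have r21 := connect_trans a2 b1.
apply/setP => Q; rewrite !inE; case: (Q \in Ps) => //=.
apply/andP/andP => [[h1 h2]|[h1 h2]]; split.
- exact: connect_trans r21 h1.
- exact: connect_trans h2 r12.
- exact: connect_trans r12 h1.
- exact: connect_trans h2 r21.
Qed.

Lemma Pstar_Fmin Q : Q \in Ps -> exists2 C, C \in Cs & Q = Fmin H C.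
Proof. by case/imsetP => C; rewrite inE => /andP[Cs' _] ->; exists C. Qed.

Lemma union_eq K1 K2 z : K1 \in cls -> K2 \in cls ->
  z \in \bigcup_(Q in K1) Q -> z \in \bigcup_(Q in K2) Q -> K1 = K2.
Proof.
move=> K1c K2c /bigcupP [Q1 Q1K zQ1] /bigcupP [Q2 Q2K zQ2].
have [C1 C1s E1] := Pstar_Fmin (class_sub K1c Q1K).
have [C2 C2s E2] := Pstar_Fmin (class_sub K2c Q2K).
have zC1 : z \in C1 by apply: (subsetP (Fmin_sub H C1)); rewrite -E1.
have zC2 : z \in C2 by apply: (subsetP (Fmin_sub H C2)); rewrite -E2.
case: (eqVneq C1 C2) => [eC|ne]; last first.
  by case: COK => _ dj _; case: (disjP (dj _ _ C1s C2s ne) zC1 zC2).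
subst C2; rewrite -E1 in E2; subst Q2.
exact: class_eq K1c K2c Q1K Q2K.
Qed.

Lemma union_ne K : K \in cls -> \bigcup_(Q in K) Q != set0.
Proof.
move=> Kc; have [P0 P0s EK] := class_mem Kc.
have P0K : P0 \in K by rewrite EK inE P0s /reach connect0.
have [C Cs' EC] := Pstar_Fmin P0s.
case: COK => ne _ _; have /set0Pn [z zF] := Fmin_ne H (ne C Cs').
by apply/set0Pn; exists z; apply/bigcupP; exists P0 => //; rewrite EC.
Qed.

Definition nextPs := [set \bigcup_(Q in K) Q | K : {set {set T}} in cls].

Lemma nextPs_OK : PsOK e H nextPs.
Proof.
split.
- by move=> P /imsetP [K Kc ->]; exact: union_ne.
- move=> P Q /imsetP [K1 K1c ->] /imsetP [K2 K2c ->] ne.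
  rewrite -setI_eq0; apply/eqP/setP => z; rewrite in_setI in_set0.
  apply/negP => /andP[z1 z2]; move: ne; rewrite (union_eq K1c K2c z1 z2) eqxx //.
- move=> P u v /imsetP [K Kc ->] uP euv hv.
  have hu : minH H (\bigcup_(Q in K) Q) <= H u by apply: minH_le.
  case/bigcupP: uP => Q QK uQ.
  have [C Cs' EC] := Pstar_Fmin (class_sub Kc QK); subst Q.
  have uC : u \in C by apply: (subsetP (Fmin_sub H C)).
  move: uQ; rewrite inE => /andP[_ /forall_inP umin].
  have vC : v \in C.
    case: (boolP (v \in C)) => // vC; case: COK => _ _ cy.
    have vb : v \in bd e C by rewrite inE vC /=; apply/exists_inP; exists u; rewrite // esym.
    by move: (cy _ _ _ Cs' uC vb); rewrite ltNge (le_trans hv hu).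
  apply/bigcupP; exists (Fmin H C) => //; rewrite inE vC /=.
  apply/forall_inP => y yC; exact: le_trans (le_trans hv hu) (umin y yC).
Qed.

Lemma nextPs_card : #|nextPs| = #|cls|.
Proof.
rewrite /nextPs card_in_imset // => K1 K2 K1c K2c eU.
have /set0Pn [z zU] := union_ne K1c.
have zU2 : z \in \bigcup_(Q in K2) Q by rewrite -eU.
exact: union_eq K1c K2c zU zU2.
Qed.

Lemma nextPs_s s : (exists2 P, P \in recP e H Cs G & s \in P) -> exists2 P, P \in nextPs & s \in P.
Proof.
case=> P /bigcupP [K Kc PK] sP; exists (\bigcup_(Q in K) Q); first exact: imset_f.
by apply/bigcupP; exists P.
Qed.

Lemma CsOK_sub (L : {set {set T}}) : L \subset Cs -> CsOK e H L.
Proof.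
move=> /subsetP sub; case: COK => a b c; split.
- by move=> C /sub; apply: a.
- by move=> C1 C2 /sub h1 /sub h2; apply: b.
- by move=> C x y /sub; apply: c.
Qed.

End Cls.


Section Base.
Variables (R : realType) (T : finType) (e : rel T) (H : T -> R).
Hypothesis esym : symmetric e.
Hypothesis econn : forall x y, connect e x y.

Lemma conn_inv (r : rel T) (Pr : T -> Prop) x y :
  (forall u v, Pr u -> r u v -> Pr v) -> Pr x -> connect r x y -> Pr y.
Proof.
move=> st Px /connectP [p pp ->]; elim: p x Px pp => //= z p IH x Px /andP[rxz pp].
exact: IH (st _ _ Px rxz) pp.
Qed.

Lemma sp_unpack P : stable_plateau e H P ->
  [/\ P != set0,
      forall x y, x \in P -> y \in P -> connect [rel u v | [&& e u v, u \in P & v \in P]] x y,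
      forall x y, x \in P -> y \in P -> H x = H y &
      forall x y, x \in P -> y \in bd e P -> H x < H y].
Proof.
case/and4P => ne /forall_inP c /forall_inP k /forall_inP b; split => //.
- by move=> x y xP yP; move/forall_inP: (c x xP) => /(_ y yP).
- by move=> x y xP yP; move/forall_inP: (k x xP) => /(_ y yP) /eqP.
- by move=> x y xP yP; move/forall_inP: (b x xP) => /(_ y yP).
Qed.

Lemma sp_sub P Q z : stable_plateau e H P -> stable_plateau e H Q -> z \in P -> z \in Q ->
  P \subset Q.
Proof.
move=> /sp_unpack [_ cP kP _] /sp_unpack [_ _ _ bQ] zP zQ; apply/subsetP => y yP.
apply: (conn_inv (Pr := fun u => u \in Q) _ zQ (cP _ _ zP yP)) => u v uQ /and3P [euv uP vP].
case: (boolP (v \in Q)) => // vQ.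
have vb : v \in bd e Q by rewrite inE vQ /=; apply/exists_inP; exists u; rewrite // esym.
by move: (bQ _ _ uQ vb); rewrite (kP _ _ uP vP) ltxx.
Qed.

Lemma Plat_OK : PsOK e H (Plateaux1 e H).
Proof.
split.
- by move=> P; rewrite inE => /andP[/sp_unpack []].
- move=> P Q; rewrite !inE => /andP[sP _] /andP[sQ _] ne.
  rewrite -setI_eq0; apply/eqP/setP => z; rewrite in_setI in_set0.
  apply/negP => /andP[zP zQ]; move: ne; apply/negP; rewrite negbK eqEsubset.
  by rewrite (sp_sub sP sQ zP zQ) (sp_sub sQ sP zQ zP).
- move=> P u v; rewrite inE => /andP[/sp_unpack [ne _ kP bP] _] uP euv hv.
  have [x xP [mx _]] := minH_spec H ne.
  case: (boolP (v \in P)) => // vP.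
  have vb : v \in bd e P by rewrite inE vP /=; apply/exists_inP; exists u; rewrite // esym.
  by move: (bP _ _ uP vb); rewrite ltNge (le_trans hv) // mx (kP _ _ xP uP).
Qed.

Variable s : T.
Hypothesis hs : forall y, H s <= H y.

Definition rs := [rel u v | [&& e u v, H u <= H s & H v <= H s]].
Definition A0 := [set y | connect rs s y].

Lemma A0_H y : y \in A0 -> H y = H s.
Proof.
rewrite inE => c; apply/eqP; rewrite eq_le hs andbT.
apply: (conn_inv (Pr := fun u => H u <= H s) _ (lexx _) c) => u v _ /and3P[].
by [].
Qed.

Lemma A0_step u v : u \in A0 -> rs u v -> v \in A0.
Proof. move=> c r; move: c; rewrite !inE => c; exact: connect_trans c (connect1 (e:=rs) r). Qed.

Lemma s_A0 : s \in A0.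
Proof. by rewrite inE connect0. Qed.

Lemma A0_plat : A0 \in Plateaux1 e H.
Proof.
rewrite inE; apply/andP; split.
- apply/and4P; split.
  + by apply/set0Pn; exists s; exact: s_A0.
  + pose rA := [rel u v | [&& e u v, u \in A0 & v \in A0]].
    have rAsym : connect_sym rA.
      apply: sym_connect_sym => u v /=; rewrite esym; by case: (u \in A0); case: (v \in A0); rewrite ?andbT ?andbF.
    have cs : forall y, y \in A0 -> connect rA s y.
      move=> y yA; have := yA; rewrite inE => c.
      have := conn_inv (Pr := fun u => u \in A0 /\ connect rA s u) _ (conj s_A0 (connect0 _ _)) c.
      case => //; move=> u v [uA cu] ruv; have vA := A0_step uA ruv; split => //.
      apply: connect_trans cu (connect1 _); rewrite /rA /= uA vA andbT.
      by rewrite andbT; case/and3P: ruv.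
    apply/forall_inP => x xA; apply/forall_inP => y yA.
    apply: connect_trans (cs y yA); rewrite rAsym; exact: cs.
  + apply/forall_inP => x xA; apply/forall_inP => y yA.
    by rewrite (A0_H xA) (A0_H yA).
  + apply/forall_inP => x xA; apply/forall_inP => y; rewrite inE => /andP[yA /exists_inP [z zA eyz]].
    rewrite (A0_H xA) ltNge; apply/negP => hy; move: yA; rewrite (A0_step zA) //.
    by rewrite /rs /= esym eyz (A0_H zA) lexx hy.
- apply/subsetP => x xA; rewrite inE.
  have xg : x \in ground H by rewrite inE; apply/forallP => y; rewrite (A0_H xA).
  have sg : s \in ground H by rewrite inE; apply/forallP => y.
  apply: le_trans (PhiS_le e H xg (set11 x)) _.
  apply: le_trans (Phi_refl H econn x) _; rewrite (A0_H xA).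
  apply: le_trans (Phi_geL H econn s s) _.
  apply: (@fin_sup R _ (fun p : T * T => Phi e H p.1 p.2)).
    by move=> r [a [b [_ _ ->]]]; exists (a, b).
  by exists s, s.
Qed.

End Base.


Section Main.
Variables (R : realType) (T : finType) (e : rel T) (H : T -> R).
Hypothesis esym : symmetric e.
Hypothesis econn : forall x y, connect e x y.
Variable s : T.
Hypothesis hs : forall y, H s <= H y.

Lemma step_lemma (d : {set {set T}} * {set {set T}}) :
  PsOK e H d.1 -> CsOK e H d.2 -> (1 < #|d.1|)%N -> (exists2 P, P \in d.1 & s \in P) ->
  [/\ exists2 P, P \in recP e H (Cs_of e H d.1 d.2) (Gstar e H d.1) & s \in P,
      PsOK e H (step e H d).1, CsOK e H (step e H d).2,
      exists2 P, P \in (step e H d).1 & s \in P &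
      #|(step e H d).1| = #|classes e H (Cs_of e H d.1 d.2) (Gstar e H d.1)| ].
Proof.
move=> POK LOK Pc [P PP sP].
have COK := Cs_OK esym econn POK Pc LOK.
have [sV mV dV] := V_s esym econn POK Pc hs PP sP.
have rec : exists2 P, P \in recP e H (Cs_of e H d.1 d.2) (Gstar e H d.1) & s \in P.
  have C0s : Vset e H d.1 P \in Cs_of e H d.1 d.2.
    by rewrite inE; apply/orP; left; exact: imset_f.
  case: COK => Cne Cdisj _.
  exists (Fmin H (Vset e H d.1 P)); first exact: (recurrent esym Cne Cdisj hs C0s mV dV).
  by rewrite inE sV; apply/forall_inP => y _.
split => //.
- exact: nextPs_OK esym _ _ COK.
- apply: (CsOK_sub COK); apply/subsetP => C.
  rewrite /step /= in_setU => /orP[].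
    by rewrite inE => /andP[]; rewrite /Cstar inE => /andP[].
  by rewrite /Csharp inE => /andP[].
- exact: nextPs_s rec.
- exact: nextPs_card COK.
Qed.

Definition Inv (d : {set {set T}} * {set {set T}}) :=
  [/\ PsOK e H d.1, CsOK e H d.2, (1 < #|d.1|)%N & exists2 P, P \in d.1 & s \in P].

Lemma CsOK0 : CsOK e H set0.
Proof. by split => C; rewrite in_set0. Qed.

End Main.

Unset Implicit Arguments.

Theorem mainTheorem7 (R : realType) (T : finType) (e : rel T) (H : T -> R) :
  symmetric e -> irreflexive e -> (forall x y : T, connect e x y) ->
  (1 < #|Plateaux1 e H|)%N ->
  forall s : T, s \in ground H ->
  forall h : nat, (0 < h)%N ->
  (forall k : nat, (0 < k < h)%N -> (1 < nu e H k)%N) ->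
  exists2 P : {set T}, P \in recL e H h & s \in P.
Proof.
move=> esym _ econn hP1 s sg h h0 hnu.
have hs : forall y, H s <= H y by move: sg; rewrite inE => /forallP.
have inv : forall k, (0 < k)%N -> (k <= h)%N -> Inv e H s (level e H k).
  elim => // [[|k]] IH _ kh.
  - rewrite /level /=; split => //=; [exact: Plat_OK | exact: CsOK0 |].
    by exists (A0 e H s); [exact: A0_plat | exact: s_A0].
  - have [POK LOK Pc sP] := IH erefl (ltnW kh).
    have [_ a b c d] := step_lemma esym econn hs POK LOK Pc sP.
    have -> : level e H k.+2 = step e H (level e H k.+1) by [].
    split => //; rewrite d; apply: (hnu k.+1); by rewrite /= kh.
have [POK LOK Pc sP] := inv h h0 (leqnn h).
by have [rec _ _ _ _] := step_lemma esym econn hs POK LOK Pc sP.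
Qed.
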